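(* Let $0<\epsilon<1/2$, $C=\lceil\epsilon^{-1}\rceil$ and $c\in\{0,\dots,C-1\}$. Let $G$ be a graph with edge weights $w(e)\ge1$, and let $G^c$, its levels, the level matchings $M^c_l$, the combined matching $\hat{M}^c$ and the sets $\mathcal{R}^c(e)$ be as defined below. Then for every edge $e\in\hat{M}^c$, $$\Phi^c(e)\le(1+3\epsilon)\,w(e),$$ where $\Phi^c(e)=\sum_{e'\in\mathcal{R}^c(e)}w(e')$.
   Context: An edge $e$ is in bucket $b\in\mathbb{Z}$ if $w(e)\in[\epsilon^{-b},\epsilon^{-(b+1)})$. The graph $G^c$ is obtained from $G$ by removing all edges whose bucket $b$ satisfies $b\equiv c\pmod C$. Level $l$ of copy $c$ consists of the edges of $G^c$ in buckets $lC+c+1,\dots,(l+1)C+c-1$. For each level $l$, $M^c_l$ is a matching consisting of level-$l$ edges of $G^c$. The combined matching $\hat{M}^c$ is formed greedily: start from $\emptyset$; for $l$ from the maximum level down to the minimum, add the (remaining) edges of $M^c_l$, and for each $(u,v)\in M^c_l$ remove all edges incident to $u$ or $v$ from every $M^c_{l'}$ with $l'<l$. For $e=(u,v)\in\hat{M}^c$ on level $l$, $\mathcal{R}^c(e)=\{e\}\cup\{(x,y)\in M^c_{l'}: l'<l,\ \{x,y\}\cap\{u,v\}\ne\emptyset\}$ (level matchings taken before removals). *)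

(* Defs.v *)
From HB Require Import structures.
From mathcomp Require Import all_boot all_order all_algebra.
Set Implicit Arguments. Unset Strict Implicit. Unset Printing Implicit Defensive.
Import Order.TTheory GRing.Theory Num.Theory.
Local Open Scope ring_scope.

Section Defs.
Variables (R : archiRealFieldType) (V E : finType) (src dst : E -> V).
Variables (eps : R) (w : E -> R).

Definition in_bucket (e : E) (b : int) : Prop :=
  eps ^ (- b) <= w e /\ w e < eps ^ (- (b + 1)).

Definition Cpar : nat := `|Num.ceil (eps^-1)|%N.

Definition in_Gc (C c : nat) (e : E) : Prop :=
  exists b : int, in_bucket e b /\ (b %% (C:int))%Z <> (c:int).

Definition on_level (C c : nat) (e : E) (l : int) : Prop :=
  in_Gc C c e /\
  exists b : int, in_bucket e b /\
    (l * C + c + 1 <= b) /\ (b <= (l + 1) * C + c - 1).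

Definition share (e f : E) : bool :=
  [|| src e == src f, src e == dst f, dst e == src f | dst e == dst f].

Definition is_matching (M : {set E}) : Prop :=
  forall e f, e \in M -> f \in M -> e != f -> ~~ share e f.

Definition greedy_step (l : int) (st : {set E} * (int -> {set E})) :
    {set E} * (int -> {set E}) :=
  let: (H, Mc) := st in
  (H :|: Mc l,
   fun l' => if l' < l then [set f in Mc l' | ~~ [exists g in Mc l, share g f]]
             else Mc l').

Fixpoint greedy_from (l : int) (n : nat) (st : {set E} * (int -> {set E})) :=
  match n with
  | 0 => st
  | n'.+1 => greedy_from (l - 1) n' (greedy_step l st)
  end.

(* combined matching \hat M, levels ranging in (hi - n, hi] *)
Definition hatM (M : int -> {set E}) (hi : int) (n : nat) : {set E} :=
  (greedy_from hi n (set0, M)).1.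

(* R(e) for e on level l: e together with the edges of lower-level
   matchings (before removals) sharing an endpoint with e *)
Definition Rset (M : int -> {set E}) (hi : int) (n : nat) (e : E) (l : int)
  : {set E} :=
  [set f | (f == e) || (share e f &&
     [exists k : 'I_n, ((hi - (k:nat)%:Z) < l) && (f \in M (hi - (k:nat)%:Z))])].

Definition Phi M hi n e l : R := \sum_(f in Rset M hi n e l) w f.

End Defs.

(* Main.v *)
Require Import Defs.
From HB Require Import structures.
From mathcomp Require Import all_boot all_order all_algebra.
From mathcomp Require Import ring lra zify.
Import Order.TTheory GRing.Theory Num.Theory.
Local Open Scope ring_scope.
Lemma expz_anti (R : realFieldType) (x : R) (z1 z2 : int) :
  0 < x -> x <= 1 -> z1 <= z2 -> x ^ z2 <= x ^ z1.
Proof.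
move=> x0 x1 hz.
have -> : z2 = z1 + (z2 - z1) by rewrite addrC subrK.
have : 0 <= z2 - z1 by rewrite subr_ge0.
case: (z2 - z1) => // k _.
rewrite expfzDr ?gt_eqF // -exprnP.
rewrite -{2}[x ^ z1]mulr1; apply: ler_wpM2l; first by rewrite exprz_ge0 // ltW.
by rewrite exprn_ile1 // ltW.
Qed.

Lemma geom (R : realFieldType) (q : R) (n : nat) : 0 <= q -> q <= 1/3 ->
  forall d : int,
  \sum_(k < n) (if 0 <= k%:Z + d then q ^ (k%:Z + d) else 0)
  <= 3/2 * (if 0 <= d then q ^ d else 1).
Proof.
move=> q0 q1; elim: n => [|n IH] d.
  rewrite big_ord0; case: ifP => _; last lra.
  by rewrite mulr_ge0 ?exprz_ge0 //; lra.
rewrite big_ord_recl /=.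
have := IH (d + 1).
under eq_bigr => i _ do rewrite /bump /= add1n -addn1 PoszD -addrA [1%:Z + d]addrC.
move=> H; apply: le_trans (lerD (lexx _) H) _.
rewrite add0r.
have [d0|d0] := lerP 0 d.
  case: d d0 H => // k _ H.
  have -> : Posz k + 1 = Posz k.+1 by rewrite -addn1 PoszD.
  rewrite /= -!exprnP exprS.
  have : 0 <= q ^+ k by rewrite exprn_ge0.
  nra.
have [d1|d1] := lerP 0 (d+1).
  have -> : d + 1 = 0 by lia.
  rewrite expr0z; lra.
lra.
Qed.
Lemma card_share (V E : finType) (src dst : E -> V) (A : {set E}) (e : E) :
  is_matching src dst A -> (#|[set f in A | share src dst e f]| <= 2)%N.
Proof.
move=> hA.
rewrite -card_bool.
apply: (@leq_card_in _ _ (fun f => (src e == src f) || (src e == dst f))).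
move=> f g; rewrite !inE => /andP [fA ef] /andP [gA eg] /= hfg.
apply/eqP; apply: contraT => nfg.
have := hA f g fA gA nfg.
move: ef eg hfg; rewrite /share.
case Hf: ((src e == src f) || (src e == dst f)).
  move=> _ _ /esym Hg.
  case/orP: Hf => /eqP Hf; case/orP: Hg => /eqP Hg;
  by rewrite -Hf -Hg eqxx ?orbT.
rewrite orbA Hf /= => ef.
case Hg: ((src e == src g) || (src e == dst g)) => //.
rewrite orbA Hg /= => eg _.
case/orP: ef => /eqP ef; case/orP: eg => /eqP eg;
by rewrite -ef -eg eqxx ?orbT.
Qed.

Lemma sum_cover (R : numDomainType) (E I : finType) (A : {set E}) (P : pred I)
  (B : I -> {set E}) (w : E -> R) : (forall f, 0 <= w f) ->
  (forall f, f \in A -> exists2 i, P i & f \in B i) ->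
  \sum_(f in A) w f <= \sum_(i | P i) \sum_(f in B i) w f.
Proof.
move=> w0 hcov.
rewrite (exchange_big_dep predT) //=.
rewrite [X in _ <= X](bigID (fun f => f \in A)) /= -[X in X <= _]addr0.
apply: lerD; last by apply: sumr_ge0 => f _; apply: sumr_ge0.
apply: ler_sum => f fA.
have [i Pi fi] := hcov f fA.
by rewrite (bigD1 i) ?Pi ?fi //= lerDl sumr_ge0.
Qed.

Theorem lemma9 (R : archiRealFieldType) (V E : finType) (src dst : E -> V)
  (hloop : forall e, src e != dst e)
  (eps : R) (heps0 : 0 < eps) (heps1 : eps < 1 / 2)
  (w : E -> R) (hw : forall e, 1 <= w e)
  (c : nat) (hc : (c < Cpar eps)%N)
  (M : int -> {set E})
  (hMmatch : forall l, is_matching src dst (M l))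
  (hMlevel : forall l f, f \in M l -> on_level eps w (Cpar eps) c f l)
  (hi : int) (n : nat)
  (hrange : forall l, M l != set0 -> hi - n%:Z < l <= hi) :
  forall (e : E) (l : int), e \in hatM src dst M hi n -> e \in M l ->
    Phi src dst w M hi n e l <= (1 + 3 * eps) * w e.
Proof.
move=> e l _ eMl.
have w0 : forall f, 0 <= w f by move=> f; apply: le_trans (hw f); apply: ler01.
have eps1 : eps <= 1 by lra.
set C := Cpar eps.
have hC : (2 <= C)%N.
  have hinv : 2 < eps^-1.
    by rewrite -div1r ltr_pdivlMr //; lra.
  have : (C%:R : R) = (Num.ceil (eps^-1))%:~R.
    rewrite /C /Cpar natr_absz ger0_norm // ceil_ge0; lra.
  have := ceil_ge (eps^-1).
  move=> h1 h2; have : (2%:R : R) < C%:R by rewrite h2; lra.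
  by rewrite ltr_nat => /ltnW.
have hq0 : 0 <= eps ^+ C by rewrite exprn_ge0 // ltW.
have hq1 : eps ^+ C <= 1/3.
  apply: le_trans (ler_wiXn2l _ _ hC) _; rewrite ?ltW //.
  - lra.
  - rewrite expr2; nra.
have [_ [b [[hb1 hb2] [hlb hbu]]]] := hMlevel l e eMl.
have heb : eps ^ (- (l * C%:Z + c%:Z + 1)) <= w e.
  apply: le_trans hb1; apply: expz_anti => //; lia.
pose B (k : 'I_n) := [set f in M (hi - (k:nat)%:Z) | share src dst e f].
have key : forall k : 'I_n, hi - (k:nat)%:Z < l ->
    \sum_(f in B k) w f <= 2 * (w e * (eps * (eps ^+ C) ^ (l - (hi - (k:nat)%:Z) - 1))).
  move=> k hk.
  set m := hi - (k:nat)%:Z.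
  have hf : forall f, f \in B k -> w f <= w e * (eps * (eps ^+ C) ^ (l - m - 1)).
    move=> f; rewrite inE => /andP [fM _].
    have [_ [b' [[hb1' hb2'] [hlb' hbu']]]] := hMlevel m f fM.
    have h1 : w f <= eps ^ (- ((m + 1) * C%:Z + c%:Z)).
      apply: le_trans (ltW hb2') _; apply: expz_anti => //; lia.
    apply: le_trans h1 _.
    have -> : - ((m + 1) * C%:Z + c%:Z) = - (l * C%:Z + c%:Z + 1) + ((l - m - 1) * C%:Z + 1).
      ring.
    rewrite expfzDr ?lt0r_neq0 //.
    have -> : eps ^ ((l - m - 1) * C%:Z + 1) = eps * (eps ^+ C) ^ (l - m - 1).
      rewrite expfzDr ?lt0r_neq0 // expr1z exprnP exprz_exp.
      by rewrite [_ * eps]mulrC (mulrC (C%:Z)).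
    apply: ler_wpM2r => //.
    by rewrite mulr_ge0 ?exprz_ge0 // ltW.
  apply: le_trans (ler_sum _ (fun f fB => hf f fB)) _.
  rewrite sumr_const -[_ *+ #|_|]mulr_natl; apply: ler_wpM2r.
    by rewrite mulr_ge0 ?w0 // mulr_ge0 ?exprz_ge0 // ltW.
  rewrite (ler_nat R); exact: card_share.
have eR : e \in Rset src dst M hi n e l by rewrite inE eqxx.
rewrite /Phi (big_setD1 e eR) /=.
have cov : forall f, f \in Rset src dst M hi n e l :\ e ->
    exists2 k : 'I_n, hi - (k:nat)%:Z < l & f \in B k.
  move=> f; rewrite !inE => /andP [fe]; rewrite (negPf fe) /= => /andP [sh].
  case/existsP => k /andP [hk fk]; exists k => //.
  by rewrite inE fk sh.
apply: le_trans (lerD (lexx _) (@sum_cover _ _ _ _ (fun k : 'I_n => hi - (k:nat)%:Z < l) B w w0 cov)) _.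
apply: le_trans (lerD (lexx _) (ler_sum _ key)) _.
set d := l - hi - 1.
set q := eps ^+ C.
have -> : \sum_(k < n | hi - (k:nat)%:Z < l) 2 * (w e * (eps * q ^ (l - (hi - (k:nat)%:Z) - 1)))
   = 2 * w e * eps * \sum_(k < n) (if 0 <= (k:nat)%:Z + d then q ^ ((k:nat)%:Z + d) else 0).
  rewrite big_mkcond mulr_sumr; apply: eq_bigr => k _.
  have -> : (hi - (k:nat)%:Z < l) = (0 <= (k:nat)%:Z + d) by rewrite /d; lia.
  have -> : l - (hi - (k:nat)%:Z) - 1 = (k:nat)%:Z + d by rewrite /d; ring.
  case: ifP => _; last by rewrite mulr0.
  by rewrite !mulrA.
have hg := @geom _ q n hq0 hq1 d.
have hX : 0 <= (if 0 <= d then q ^ d else 1) <= 1.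
  case: ifP => hd; last by rewrite ler01 lexx.
  case: d hd {hg} => // k _; rewrite -exprnP exprn_ge0 ?exprn_ile1 //; lra.
set S := \sum_(k < n) _ in hg *.
set X := (if 0 <= d then q ^ d else 1) in hg hX.
have he := w0 e.
have h2 : 0 <= 2 * w e * eps by rewrite !mulr_ge0 // ltW.
have := ler_wpM2l h2 hg.
move: hX => /andP [hX0 hX1].
nra.
Qed.
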